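(* Let $\kappa>0$ and $0<\gamma\le\pi/2$. Let $S$ be a sessile liquid channel (a $\kappa$-cylindrical surface supported on the horizontal plane $\Pi$) making contact angle $\gamma$, with volume $\mathcal V$. Then every sessile liquid channel resting on $\Pi$ with the same contact angle $\gamma$ and smaller volume can be rigidly translated so that it lies strictly in the interior of the region enclosed by $S$ and $\Pi$.
   Context: For $u_0>0$, $(r(\psi),u(\psi))$, $\psi\in[0,\pi]$, is the solution of $\frac{dr}{d\psi}=\frac{\cos\psi}{\kappa u}$, $\frac{du}{d\psi}=\frac{\sin\psi}{\kappa u}$, $r(0)=0$, $u(0)=u_0$ (profile of a $\kappa$-cylindrical surface parametrized by inclination angle). The channel with parameter $u_0$ and contact angle $\gamma$ has cross-section the planar region bounded by the curve $\{(\pm r(\psi),u(\psi)):0\le\psi\le\gamma\}$ and the segment of the line $u=u(\gamma)$ (the plane $\Pi$) joining its endpoints; its volume per unit length is $\mathcal V=2\big(r(\gamma)u(\gamma)-\frac{\sin\gamma}\kappa\big)$. *)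

(* Defs.v *)
From Stdlib Require Import Reals.
From Coquelicot Require Import Coquelicot.
Open Scope R_scope.

Definition is_profile (kappa u0 : R) (r u : R -> R) : Prop :=
  r 0 = 0 /\ u 0 = u0 /\
  (forall psi, 0 <= psi <= PI ->
     is_derive r psi (cos psi / (kappa * u psi)) /\
     is_derive u psi (sin psi / (kappa * u psi))).

(* Closed cross-section of the channel with contact angle gamma (0<gamma<=pi/2):
   the planar region bounded by the curve {(+-r(psi),u(psi)) : 0<=psi<=gamma}
   and the segment of the line u = u(gamma) joining its endpoints.
   Since r is increasing on [0,gamma] the curve is a graph over |x|. *)
Definition channel_region (gamma : R) (r u : R -> R) (x y : R) : Prop :=
  exists psi, 0 <= psi <= gamma /\ Rabs x = r psi /\ u psi <= y <= u gamma.

(* Volume per unit length. *)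
Definition channel_volume (kappa gamma : R) (r u : R -> R) : R :=
  2 * (r gamma * u gamma - sin gamma / kappa).

Definition interior_pt (A : R -> R -> Prop) (x y : R) : Prop :=
  exists e, 0 < e /\ forall x' y', Rabs (x' - x) < e -> Rabs (y' - y) < e -> A x' y'.

(* Main.v *)
From Stdlib Require Import Reals Lra Psatz Ranalysis5.
Require Import Defs.
From Coquelicot Require Import Coquelicot.
Open Scope R_scope.

Lemma D_ext (f : R -> R) (x l l' : R) : is_derive f x l -> l = l' -> is_derive f x l'.
Proof. intros H ->; exact H. Qed.
Lemma D_plus (f g : R -> R) (x a b : R) : is_derive f x a -> is_derive g x b -> is_derive (fun t => f t + g t) x (a + b).
Proof. intros Hf Hg. exact (is_derive_plus f g x a b Hf Hg). Qed.
Lemma D_minus (f g : R -> R) (x a b : R) : is_derive f x a -> is_derive g x b -> is_derive (fun t => f t - g t) x (a - b).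
Proof. intros Hf Hg. exact (is_derive_minus f g x a b Hf Hg). Qed.
Lemma D_mult (f g : R -> R) (x a b : R) : is_derive f x a -> is_derive g x b -> is_derive (fun t => f t * g t) x (a * g x + f x * b).
Proof. intros Hf Hg. exact (is_derive_mult f g x a b Hf Hg Rmult_comm). Qed.
Lemma D_scal (k : R) (f : R -> R) (x a : R) : is_derive f x a -> is_derive (fun t => k * f t) x (k * a).
Proof. intros Hf. exact (is_derive_scal f x k a Hf). Qed.
Lemma D_const (k x : R) : is_derive (fun _ => k) x 0.
Proof. exact (is_derive_const k x). Qed.
Lemma D_id (x : R) : is_derive (fun t => t) x 1.
Proof. exact (is_derive_id x). Qed.
Lemma D_cos (x : R) : is_derive cos x (- sin x).
Proof. exact (is_derive_cos x). Qed.
Lemma D_sin (x : R) : is_derive sin x (cos x).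
Proof. exact (is_derive_sin x). Qed.

Lemma cont_of_der (f : R -> R) (x l : R) : is_derive f x l -> continuity_pt f x.
Proof. intros H. apply continuity_pt_filterlim.
  apply (ex_derive_continuous f x). exists l; exact H. Qed.

Lemma mono_le (f df : R -> R) (a b : R) : a <= b ->
  (forall x, a <= x <= b -> is_derive f x (df x)) ->
  (forall x, a <= x <= b -> 0 <= df x) -> f a <= f b.
Proof.
  intros Hab Hd Hp.
  destruct (MVT_gen f a b df) as [c [Hc Heq]].
  - intros x Hx. rewrite Rmin_left in Hx by lra. rewrite Rmax_right in Hx by lra.
    apply Hd; lra.
  - intros x Hx. rewrite Rmin_left in Hx by lra. rewrite Rmax_right in Hx by lra.
    eapply cont_of_der, Hd; lra.
  - rewrite Rmin_left in Hc by lra. rewrite Rmax_right in Hc by lra.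
    assert (0 <= df c) by (apply Hp; lra).
    assert (0 <= df c * (b - a)) by (apply Rmult_le_pos; lra). lra.
Qed.

Lemma mono_lt (f df : R -> R) (a b : R) : a < b ->
  (forall x, a <= x <= b -> is_derive f x (df x)) ->
  (forall x, a <= x <= b -> 0 < df x) -> f a < f b.
Proof.
  intros Hab Hd Hp.
  destruct (MVT_gen f a b df) as [c [Hc Heq]].
  - intros x Hx. rewrite Rmin_left in Hx by lra. rewrite Rmax_right in Hx by lra.
    apply Hd; lra.
  - intros x Hx. rewrite Rmin_left in Hx by lra. rewrite Rmax_right in Hx by lra.
    eapply cont_of_der, Hd; lra.
  - rewrite Rmin_left in Hc by lra. rewrite Rmax_right in Hc by lra.
    assert (0 < df c) by (apply Hp; lra).
    assert (0 < df c * (b - a)) by (apply Rmult_lt_0_compat; lra). lra.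
Qed.

Lemma D_s (k x : R) : k <> 0 -> is_derive (fun t => 2 * (1 - cos t) / k) x (2 * sin x / k).
Proof. intros Hk. unfold Rdiv.
  apply D_ext with ((2 * (0 - - sin x)) * / k + 2 * (1 - cos x) * 0).
  apply (D_mult (fun t => 2 * (1 - cos t)) (fun _ => / k)).
  apply D_scal. apply D_minus. apply D_const. apply D_cos. apply D_const. ring. Qed.

Lemma prof_facts k u0 r v : 0 < k -> 0 < u0 -> is_profile k u0 r v ->
  forall p, 0 <= p <= PI -> 0 < v p /\ v p * v p = u0 * u0 + 2 * (1 - cos p) / k.
Proof.
  intros Hk Hu [Hr0 [Hv0 Hd]].
  assert (Hsq : forall p, 0 <= p <= PI -> u0 * u0 <= v p * v p).
  { intros p Hp. rewrite <- Hv0.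
    apply (mono_le (fun t => v t * v t) (fun t => sin t / (k * v t) * v t + v t * (sin t / (k * v t))) 0 p); try lra.
    - intros x Hx. apply D_mult; apply (Hd x); lra.
    - intros x Hx. destruct (Req_dec (v x) 0) as [E|E].
      + rewrite E. lra.
      + replace (sin x / (k * v x) * v x + v x * (sin x / (k * v x))) with (2 * sin x / k) by (field; lra).
        assert (0 <= sin x) by (apply sin_ge_0; lra).
        apply Rdiv_le_0_compat; lra. }
  assert (Hnz : forall p, 0 <= p <= PI -> v p <> 0).
  { intros p Hp E. specialize (Hsq p Hp). rewrite E in Hsq. nra. }
  assert (Hpos : forall p, 0 <= p <= PI -> 0 < v p).
  { intros p Hp. destruct (Rtotal_order 0 (v p)) as [H|[H|H]]; [exact H| exfalso; apply (Hnz p Hp); auto|].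
    destruct (Req_dec p 0) as [E|E]. { subst p. lra. }
    destruct (IVT_interv (fun t => - v t) 0 p) as [z [Hz Hz0]].
    - intros a Ha. apply (cont_of_der _ _ (- (sin a / (k * v a)))).
      apply (is_derive_opp v a). apply Hd; lra.
    - lra.
    - rewrite Hv0; lra.
    - lra.
    - exfalso. apply (Hnz z); lra. }
  intros p Hp. split; [apply Hpos; exact Hp|].
  set (w := fun t => v t * v t - 2 * (1 - cos t) / k).
  assert (Hw : forall x, 0 <= x <= PI -> is_derive w x 0).
  { intros x Hx. unfold w.
    apply D_ext with (sin x / (k * v x) * v x + v x * (sin x / (k * v x)) - 2 * sin x / k).
    - apply D_minus. apply D_mult; apply (Hd x); lra. apply D_s; lra.
    - field. split; [lra| apply Hnz; lra]. }
  assert (w 0 <= w p) by (apply (mono_le w (fun _ => 0)); [lra|intros; apply Hw; lra|intros; lra]).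
  assert (- w 0 <= - w p).
  { apply (mono_le (fun t => - w t) (fun _ => - 0)); [lra| |intros; lra].
    intros x Hx. apply (is_derive_opp w x 0). apply Hw; lra. }
  assert (w 0 = u0 * u0) by (unfold w; rewrite Hv0, cos_0; field; lra).
  unfold w in *. lra.
Qed.
Lemma alg1 u0 u1 a b s : 0 < u0 -> u0 < u1 -> 0 < a -> 0 < b -> 0 <= s ->
  a * a = u0 * u0 + s -> b * b = u1 * u1 + s -> a < b /\ b - u1 <= a - u0.
Proof. intros. assert (a < b) by nra. split; [auto|].
  assert (u0 <= a) by nra. assert (u1 <= b) by nra. nra. Qed.
Lemma alg2 u0 u1 a b s : 0 < u0 -> u0 < u1 -> 0 < a -> 0 < b -> 0 < s ->
  a * a = u0 * u0 + s -> b * b = u1 * u1 + s -> b - u1 < a - u0.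
Proof. intros. assert (a < b) by nra.
  assert (u0 < a) by nra. assert (u1 < b) by nra. nra. Qed.
Lemma alg3 u0 u1 a0 a1 b0 b1 s t : 0 < u1 -> u1 <= u0 -> 0 < a0 -> 0 < a1 -> 0 < b0 -> 0 < b1 -> s <= t ->
  a0 * a0 = u0 * u0 + s -> a1 * a1 = u1 * u1 + s -> b0 * b0 = u0 * u0 + t -> b1 * b1 = u1 * u1 + t ->
  b0 * a1 <= b1 * a0.
Proof. intros h1 h2 h3 h4 h5 h6 h7 Ea0 Ea1 Eb0 Eb1.
  assert (E1 : (b0*a1)*(b0*a1) = (u0 * u0 + t) * (u1 * u1 + s)) by (rewrite <- Eb0, <- Ea1; ring).
  assert (E2 : (b1*a0)*(b1*a0) = (u1 * u1 + t) * (u0 * u0 + s)) by (rewrite <- Eb1, <- Ea0; ring).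
  assert (u1 * u1 <= u0 * u0) by nra.
  assert ((b0*a1)*(b0*a1) <= (b1*a0)*(b1*a0)) by (rewrite E1, E2; nra).
  assert (0 < b0 * a1) by nra. assert (0 < b1 * a0) by nra. nra. Qed.

Theorem mainTheorem15 (kappa gamma u0 u1 : R) (r0 v0 r1 v1 : R -> R) :
  0 < kappa -> 0 < gamma <= PI / 2 ->
  0 < u0 -> is_profile kappa u0 r0 v0 ->
  0 < u1 -> is_profile kappa u1 r1 v1 ->
  channel_volume kappa gamma r1 v1 < channel_volume kappa gamma r0 v0 ->
  exists a b : R, forall x y : R,
    channel_region gamma r1 v1 x y ->
    interior_pt (channel_region gamma r0 v0) (x + a) (y + b).
Proof.
  intros Hk [Hg0 Hg1] Hu0 P0 Hu1 P1 Hvol.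
  assert (HgPI : gamma <= PI) by (pose proof PI_RGT_0; lra).
  pose proof (prof_facts _ _ _ _ Hk Hu0 P0) as F0.
  pose proof (prof_facts _ _ _ _ Hk Hu1 P1) as F1.
  destruct P0 as [Hr00 [Hv00 D0]]. destruct P1 as [Hr10 [Hv10 D1]].
  set (s := fun t => 2 * (1 - cos t) / kappa).
  assert (Hs : forall t, 0 <= t <= gamma -> 0 <= s t /\ s t <= s gamma).
  { intros t Ht. unfold s. split.
    - pose proof (COS_bound t). apply Rdiv_le_0_compat; lra.
    - assert (cos gamma <= cos t) by (apply cos_decr_1; lra).
      unfold Rdiv; apply Rmult_le_compat_r. left; apply Rinv_0_lt_compat; lra. lra. }
  assert (Hcos : forall t, 0 <= t <= gamma -> 0 <= cos t).
  { intros t Ht. destruct (Req_dec t (PI/2)) as [E|E].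
    - subst; rewrite cos_PI2; lra.
    - left; apply cos_gt_0; lra. }
  assert (Hlt : u0 < u1).
  { destruct (Rlt_le_dec u0 u1) as [h|h]; [exact h| exfalso].
    assert (HD : (fun t => v1 gamma * r1 t - v0 gamma * r0 t) 0 <= (fun t => v1 gamma * r1 t - v0 gamma * r0 t) gamma).
    { apply (mono_le (fun t => v1 gamma * r1 t - v0 gamma * r0 t) (fun t => v1 gamma * (cos t / (kappa * v1 t)) - v0 gamma * (cos t / (kappa * v0 t)))); [lra| |].
      - intros x Hx. apply D_minus; apply D_scal; [apply D1|apply D0]; lra.
      - intros x Hx. destruct (F0 x ltac:(lra)) as [p0 e0]. destruct (F1 x ltac:(lra)) as [p1 e1].
        destruct (F0 gamma ltac:(lra)) as [q0 f0]. destruct (F1 gamma ltac:(lra)) as [q1 f1].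
        replace (v1 gamma * (cos x / (kappa * v1 x)) - v0 gamma * (cos x / (kappa * v0 x)))
          with (cos x * (v1 gamma * v0 x - v0 gamma * v1 x) / (kappa * v1 x * v0 x)) by (field; lra).
        apply Rdiv_le_0_compat; [|apply Rmult_lt_0_compat; [apply Rmult_lt_0_compat|]; lra].
        apply Rmult_le_pos; [apply Hcos; lra|].
        assert (v0 gamma * v1 x <= v1 gamma * v0 x); [|lra].
        apply (alg3 u0 u1 (v0 x) (v1 x) (v0 gamma) (v1 gamma) (s x) (s gamma)); auto; apply Hs; lra. }
    simpl in HD. rewrite Hr00, Hr10 in HD. unfold channel_volume in Hvol. nra. }
  assert (Hvv : forall t, 0 <= t <= gamma -> v0 t < v1 t /\ v1 t - u1 <= v0 t - u0).
  { intros t Ht. destruct (F0 t ltac:(lra)) as [p0 e0]. destruct (F1 t ltac:(lra)) as [p1 e1].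
    apply (alg1 u0 u1 (v0 t) (v1 t) (s t)); auto. apply Hs; lra. }
  assert (Hpos0 : forall t, 0 <= t <= gamma -> 0 < v0 t) by (intros t Ht; apply F0; lra).
  assert (Hpos1 : forall t, 0 <= t <= gamma -> 0 < v1 t) by (intros t Ht; apply F1; lra).
  assert (Hrr : forall t, 0 <= t <= gamma -> r1 t <= r0 t).
  { intros t Ht.
    assert (r0 0 - r1 0 <= r0 t - r1 t); [|rewrite Hr00, Hr10 in *; lra].
    apply (mono_le (fun x => r0 x - r1 x) (fun x => cos x / (kappa * v0 x) - cos x / (kappa * v1 x))); [lra| |].
    - intros x Hx. apply D_minus; [apply D0|apply D1]; lra.
    - intros x Hx. pose proof (Hpos0 x ltac:(lra)). pose proof (Hpos1 x ltac:(lra)).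
      destruct (Hvv x ltac:(lra)).
      replace (cos x / (kappa * v0 x) - cos x / (kappa * v1 x))
        with (cos x * (v1 x - v0 x) / (kappa * v0 x * v1 x)) by (field; lra).
      apply Rdiv_le_0_compat; [|apply Rmult_lt_0_compat; [apply Rmult_lt_0_compat|]; lra].
      apply Rmult_le_pos; [apply Hcos; lra| lra]. }
  assert (HR : r1 gamma < r0 gamma).
  { assert (r0 0 - r1 0 < r0 (gamma/2) - r1 (gamma/2)).
    { apply (mono_lt (fun x => r0 x - r1 x) (fun x => cos x / (kappa * v0 x) - cos x / (kappa * v1 x))); [lra| |].
      - intros x Hx. apply D_minus; [apply D0|apply D1]; lra.
      - intros x Hx. pose proof (Hpos0 x ltac:(lra)). pose proof (Hpos1 x ltac:(lra)).
        destruct (Hvv x ltac:(lra)).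
        replace (cos x / (kappa * v0 x) - cos x / (kappa * v1 x))
          with (cos x * (v1 x - v0 x) / (kappa * v0 x * v1 x)) by (field; lra).
        apply Rdiv_lt_0_compat; [|apply Rmult_lt_0_compat; [apply Rmult_lt_0_compat|]; lra].
        apply Rmult_lt_0_compat; [apply cos_gt_0; lra| lra]. }
    assert (r0 (gamma/2) - r1 (gamma/2) <= r0 gamma - r1 gamma).
    { apply (mono_le (fun x => r0 x - r1 x) (fun x => cos x / (kappa * v0 x) - cos x / (kappa * v1 x))); [lra| |].
      - intros x Hx. apply D_minus; [apply D0|apply D1]; lra.
      - intros x Hx. pose proof (Hpos0 x ltac:(lra)). pose proof (Hpos1 x ltac:(lra)).
        destruct (Hvv x ltac:(lra)).
        replace (cos x / (kappa * v0 x) - cos x / (kappa * v1 x))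
          with (cos x * (v1 x - v0 x) / (kappa * v0 x * v1 x)) by (field; lra).
        apply Rdiv_le_0_compat; [|apply Rmult_lt_0_compat; [apply Rmult_lt_0_compat|]; lra].
        apply Rmult_le_pos; [apply Hcos; lra| lra]. }
    rewrite Hr00, Hr10 in *; lra. }
  assert (Hr1m : forall t, 0 <= t <= gamma -> r1 t <= r1 gamma).
  { intros t Ht. apply (mono_le r1 (fun x => cos x / (kappa * v1 x))); [lra| |].
    - intros x Hx. apply D1; lra.
    - intros x Hx. pose proof (Hpos1 x ltac:(lra)). apply Rdiv_le_0_compat; [apply Hcos; lra| nra]. }
  set (Delta := (v0 gamma - u0) - (v1 gamma - u1)).
  assert (HDelta : 0 < Delta).
  { unfold Delta. destruct (F0 gamma ltac:(lra)) as [p0 e0]. destruct (F1 gamma ltac:(lra)) as [p1 e1].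
    assert (0 < s gamma).
    { unfold s. assert (cos gamma < cos 0) by (apply cos_decreasing_1; lra).
      rewrite cos_0 in *. apply Rdiv_lt_0_compat; lra. }
    assert (v1 gamma - u1 < v0 gamma - u0) by (apply (alg2 u0 u1 (v0 gamma) (v1 gamma) (s gamma)); auto).
    lra. }
  assert (HL : forall t, 0 <= t <= gamma ->
     0 <= cos t * ((v1 t - u1) - (v0 t - u0)) + sin t * (r0 t - r1 t)).
  { intros t Ht.
    assert (E : cos 0 * ((v1 0 - u1) - (v0 0 - u0)) + sin 0 * (r0 0 - r1 0) = 0)
      by (rewrite Hv00, Hv10, sin_0; ring).
    assert (cos 0 * ((v1 0 - u1) - (v0 0 - u0)) + sin 0 * (r0 0 - r1 0) <=
            cos t * ((v1 t - u1) - (v0 t - u0)) + sin t * (r0 t - r1 t)); [|lra].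
    apply (mono_le (fun t => cos t * ((v1 t - u1) - (v0 t - u0)) + sin t * (r0 t - r1 t))
       (fun t => - sin t * ((v1 t - u1) - (v0 t - u0)) + cos t * (r0 t - r1 t))); [lra| |].
    - intros x Hx. pose proof (Hpos0 x ltac:(lra)). pose proof (Hpos1 x ltac:(lra)).
      destruct (D0 x ltac:(lra)) as [Dr0 Dv0]. destruct (D1 x ltac:(lra)) as [Dr1 Dv1].
      assert (HA : is_derive (fun t => (v1 t - u1) - (v0 t - u0)) x
                 ((sin x / (kappa * v1 x) - 0) - (sin x / (kappa * v0 x) - 0))).
      { apply (D_minus (fun t => v1 t - u1) (fun t => v0 t - u0));
        [apply (D_minus v1 (fun _ => u1))|apply (D_minus v0 (fun _ => u0))]; auto; apply D_const. }
      assert (HB : is_derive (fun t => r0 t - r1 t) x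
                 (cos x / (kappa * v0 x) - cos x / (kappa * v1 x))).
      { apply (D_minus r0 r1); auto. }
      pose proof (D_mult cos (fun t => (v1 t - u1) - (v0 t - u0)) x _ _ (D_cos x) HA) as H1.
      pose proof (D_mult sin (fun t => r0 t - r1 t) x _ _ (D_sin x) HB) as H2.
      pose proof (D_plus _ _ x _ _ H1 H2) as H3.
      apply (D_ext _ _ _ _ H3). field; lra.
    - intros x Hx. destruct (Hvv x ltac:(lra)). pose proof (Hrr x ltac:(lra)).
      assert (0 <= sin x) by (apply sin_ge_0; lra). pose proof (Hcos x ltac:(lra)).
      assert (0 <= sin x * ((v0 x - u0) - (v1 x - u1))) by (apply Rmult_le_pos; lra).
      assert (0 <= cos x * (r0 x - r1 x)) by (apply Rmult_le_pos; lra). lra. }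
  assert (HK : forall phi psi, 0 <= phi <= gamma -> 0 <= psi <= gamma ->
     0 <= cos phi * (v1 psi - u1 + u0 - v0 phi) - sin phi * (r1 psi - r0 phi)).
  { intros phi psi Hphi Hpsi.
    set (Kf := fun t => cos phi * (v1 t - u1 + u0 - v0 phi) - sin phi * (r1 t - r0 phi)).
    assert (HKd : forall x, 0 <= x <= gamma -> is_derive Kf x (sin (x - phi) / (kappa * v1 x))).
    { intros x Hx. pose proof (Hpos1 x ltac:(lra)).
      destruct (D1 x ltac:(lra)) as [Dr1 Dv1].
      pose proof (D_minus (fun t => v1 t - u1 + u0) (fun _ => v0 phi) x _ _
        (D_plus (fun t => v1 t - u1) (fun _ => u0) x _ _
          (D_minus v1 (fun _ => u1) x _ _ Dv1 (D_const u1 x)) (D_const u0 x)) (D_const (v0 phi) x)) as HA.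
      pose proof (D_minus r1 (fun _ => r0 phi) x _ _ Dr1 (D_const (r0 phi) x)) as HB.
      pose proof (D_minus _ _ x _ _ (D_scal (cos phi) _ x _ HA) (D_scal (sin phi) _ x _ HB)) as H3.
      apply (D_ext _ _ _ _ H3). rewrite sin_minus. field; lra. }
    assert (HKphi : 0 <= Kf phi).
    { unfold Kf. pose proof (HL phi Hphi). 
      replace (cos phi * (v1 phi - u1 + u0 - v0 phi) - sin phi * (r1 phi - r0 phi))
        with (cos phi * ((v1 phi - u1) - (v0 phi - u0)) + sin phi * (r0 phi - r1 phi)) by ring. lra. }
    change (0 <= Kf psi).
    destruct (Rle_dec phi psi) as [h|h].
    - assert (Kf phi <= Kf psi); [|lra].
      apply (mono_le Kf (fun x => sin (x - phi) / (kappa * v1 x))); [lra| |].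
      + intros x Hx. apply HKd; lra.
      + intros x Hx. pose proof (Hpos1 x ltac:(lra)).
        apply Rdiv_le_0_compat; [apply sin_ge_0; lra| nra].
    - assert (- Kf psi <= - Kf phi); [|lra].
      apply (mono_le (fun t => - Kf t) (fun x => - (sin (x - phi) / (kappa * v1 x)))); [lra| |].
      + intros x Hx. apply (is_derive_opp Kf x _). apply HKd; lra.
      + intros x Hx. pose proof (Hpos1 x ltac:(lra)).
        replace (x - phi) with (- (phi - x)) by ring. rewrite sin_neg.
        replace (- (- sin (phi - x) / (kappa * v1 x))) with (sin (phi - x) / (kappa * v1 x)) by (field; lra).
        apply Rdiv_le_0_compat; [apply sin_ge_0; lra| nra]. }
  assert (Hc := cont_of_der r0 gamma _ (proj1 (D0 gamma ltac:(lra)))).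
  unfold continuity_pt, continue_in, limit1_in, limit_in, D_x, no_cond in Hc. simpl in Hc.
  destruct (Hc (r0 gamma - r1 gamma) ltac:(lra)) as [eta [Heta Hn]].
  set (g' := gamma - Rmin eta gamma / 2).
  assert (Hmin1 := Rmin_l eta gamma). assert (Hmin2 := Rmin_r eta gamma).
  assert (Hmin3 : 0 < Rmin eta gamma) by (apply Rmin_glb_lt; lra).
  assert (Hg' : 0 < g' < gamma) by (unfold g'; lra).
  assert (Hr0g' : r1 gamma < r0 g').
  { assert (Rabs (r0 g' - r0 gamma) < r0 gamma - r1 gamma).
    { apply Hn. split; [split; [trivial| unfold g'; lra]|].
      unfold R_dist. rewrite Rabs_left; unfold g'; lra. }
    apply Rabs_def2 in H. lra. }
  assert (Hcg' : 0 < cos g') by (apply cos_gt_0; lra).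
  assert (Hcg1 : cos g' <= 1) by (pose proof (COS_bound g'); lra).
  set (delta := Delta / 2).
  set (e := Rmin (Delta / 2) (Rmin (delta * cos g' / 2) (r0 g' - r1 gamma))).
  assert (He1 := Rmin_l (Delta / 2) (Rmin (delta * cos g' / 2) (r0 g' - r1 gamma))).
  assert (He2 := Rmin_r (Delta / 2) (Rmin (delta * cos g' / 2) (r0 g' - r1 gamma))).
  assert (He3 := Rmin_l (delta * cos g' / 2) (r0 g' - r1 gamma)).
  assert (He4 := Rmin_r (delta * cos g' / 2) (r0 g' - r1 gamma)).
  assert (Hepos : 0 < e).
  { unfold e. apply Rmin_glb_lt; [lra|]. apply Rmin_glb_lt; [|lra].
    unfold delta. apply Rmult_lt_0_compat; [apply Rmult_lt_0_compat|]; lra. }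
  fold e in He1, He2. 
  exists 0, (u0 - u1 + delta). intros x y [psi [Hpsi [Hx Hy]]].
  exists e. split; [exact Hepos|]. intros x' y' Hx' Hy'.
  rewrite Rplus_0_r in Hx'.
  assert (Ht1 := Rabs_triang_inv x' x). assert (Ht2 := Rabs_triang_inv x x').
  rewrite Rabs_minus_sym in Ht2.
  assert (Hr1psi := Hr1m psi Hpsi).
  assert (Hax : Rabs x' <= r0 g') by lra.
  assert (Hax0 := Rabs_pos x').
  assert (Hphi : exists phi, 0 <= phi <= g' /\ r0 phi = Rabs x').
  { destruct (Req_dec (Rabs x') 0) as [E|E].
    { exists 0; split; [lra| rewrite Hr00; auto]. }
    destruct (Req_dec (Rabs x') (r0 g')) as [E'|E'].
    { exists g'; split; [lra| auto]. }
    destruct (IVT_interv (fun t => r0 t - Rabs x') 0 g') as [z [Hz Hz0]].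
    - intros a Ha. apply (cont_of_der _ _ (cos a / (kappa * v0 a) - 0)).
      apply (D_minus r0 (fun _ => Rabs x')). apply D0; lra. apply D_const.
    - lra.
    - rewrite Hr00; lra.
    - lra.
    - exists z; split; lra. }
  destruct Hphi as [phi [Hphi Hrphi]].
  assert (Hphig : 0 <= phi <= gamma) by lra.
  exists phi. split; [exact Hphig|]. split; [auto|].
  apply Rabs_def2 in Hy'.
  pose proof (HK phi psi Hphig Hpsi) as K.
  rewrite <- Hx, Hrphi in K.
  set (A := v1 psi - u1 + u0 - v0 phi) in K. assert (HAdef : A = v1 psi - u1 + u0 - v0 phi) by reflexivity. clearbody A.
  assert (Hsin : 0 <= sin phi <= 1) by (split; [apply sin_ge_0; lra| apply SIN_bound]).
  assert (HcA : - e <= cos phi * A).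
  { assert (0 <= sin phi * (Rabs x - Rabs x' + e)) by (apply Rmult_le_pos; lra).
    assert (sin phi * e <= 1 * e) by (apply Rmult_le_compat_r; lra). lra. }
  assert (Hcphi : cos g' <= cos phi) by (apply cos_decr_1; lra).
  assert (HA : 0 <= A + delta - e).
  { destruct (Rle_dec 0 A) as [h|h].
    - unfold delta in *. nra.
    - assert (cos g' * A >= cos phi * A) by nra.
      assert (0 <= cos g' * (A + delta - e)); [|nra].
      assert (e <= delta * cos g' / 2) by lra. nra. }
  unfold delta, Delta in *. split; lra.
Qed.
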